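(* Let $\mathbb{A}$ be a Boolean algebra and $(\mathbb{B},\mu)$ a metric Boolean algebra. Then on $\mathcal{H}(\mathbb{A},\mathbb{B})$ we have $d_{hom}=d_{hom}^{Bor}$, where for $\varphi,\psi\in\mathcal{H}(\mathbb{A},\mathbb{B})$ $d_{hom}(\varphi,\psi)=\sup\{\mu(\varphi(A)\triangle\psi(A))\colon A\in\mathbb{A}\}$ and $d_{hom}^{Bor}(\varphi,\psi)=\sup\{\widehat{\mu}(f_\varphi^{-1}[B]\triangle f_\psi^{-1}[B])\colon B\text{ a Borel subset of }St(\mathbb{A})\}$.
   Context: A metric Boolean algebra $(\mathbb{B},\mu)$ is a Boolean algebra with a strictly positive finitely additive probability measure $\mu$. $\mathcal{H}(\mathbb{A},\mathbb{B})$ is the set of homomorphisms $\mathbb{A}\to\mathbb{B}$. Algebras are identified with the clopen algebras of their Stone spaces $St(\cdot)$; $\widehat{\mu}$ is the unique Radon measure on $St(\mathbb{B})$ extending $\mu$; $f_\varphi\colon St(\mathbb{B})\to St(\mathbb{A})$ is the continuous map $f_\varphi(x)=\varphi^{-1}[x]$. *)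

(* Defs.v *)
From HB Require Import structures.
From mathcomp Require Import all_boot all_order all_algebra.
From mathcomp Require Import all_classical all_reals all_analysis.

Set Implicit Arguments.
Unset Strict Implicit.
Unset Printing Implicit Defensive.

Import Order.TTheory GRing.Theory Num.Theory.
Local Open Scope classical_set_scope.
Local Open Scope ring_scope.

(* Boolean algebras are modelled by mathcomp's complemented distributive
   lattices with top and bottom: ctbDistrLatticeType d. *)

Section BA.
Context {d : Order.disp_t} (A : ctbDistrLatticeType d).

Definition bsymdiff (a b : A) : A :=
  Order.join (Order.meet a (Order.compl b)) (Order.meet b (Order.compl a)).

Definition ultrafilter_of (x : set A) : Prop :=
  [/\ x Order.top, ~ x Order.bottom,
      (forall a b, x a -> x b -> x (Order.meet a b)),
      (forall a b, x a -> (a <= b)%O -> x b) &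
      (forall a, x a \/ x (Order.compl a))].

Definition St : Type := {x : set A | `[< ultrafilter_of x >]}.

HB.instance Definition _ := gen_eqMixin St.
HB.instance Definition _ := gen_choiceMixin St.

Definition clopen_of (a : A) : set St := [set x : St | proj1_sig x a].

Definition St_subbase (i : option A) : set St :=
  if i is Some a then clopen_of a else setT.

HB.instance Definition _ :=
  @isSubBaseTopological.Build St (option A) setT St_subbase.

Definition St_borel : set (set St) := <<s [set U : set St | open U] >>.

End BA.

Section Hom.
Context {dA dB : Order.disp_t} (A : ctbDistrLatticeType dA)
  (B : ctbDistrLatticeType dB).

Definition is_bhom (f : A -> B) : Prop :=
  [/\ forall a b, f (Order.meet a b) = Order.meet (f a) (f b),
      forall a b, f (Order.join a b) = Order.join (f a) (f b),
      forall a, f (Order.compl a) = Order.compl (f a),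
      f Order.bottom = Order.bottom &
      f Order.top = Order.top].

(* f_phi^{-1}[C] for C a subset of St(A), where f_phi(x) = phi^{-1}[x] *)
Definition stone_preimage (phi : A -> B) (C : set (St A)) : set (St B) :=
  [set x : St B | exists y : St A,
     proj1_sig y = phi @^-1` (proj1_sig x) /\ C y].
End Hom.

Section Metric.
Context {R : realType} {d : Order.disp_t} (B : ctbDistrLatticeType d).

(* (B, mu) is a metric Boolean algebra: mu is a strictly positive finitely
   additive probability measure on B *)
Definition metric_measure (mu : B -> R) : Prop :=
  [/\ mu Order.top = 1,
      (forall b, b != Order.bottom -> 0 < mu b) &
      (forall a b, Order.meet a b = Order.bottom ->
         mu (Order.join a b) = mu a + mu b)].

Definition borel_measure (nu : set (St B) -> \bar R) : Prop :=
  [/\ nu set0 = 0%E,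
      (forall E, St_borel E -> (0 <= nu E)%E) &
      (forall F : nat -> set (St B), (forall n, St_borel (F n)) ->
         trivIset setT F ->
         ((fun n => \sum_(0 <= i < n) nu (F i))%E @ \oo
            --> nu (\bigcup_n F n)))].

(* Radon: inner regular with respect to compact sets (finiteness follows
   from nu St(B) = mu(top) = 1) *)
Definition radon (nu : set (St B) -> \bar R) : Prop :=
  borel_measure nu /\
  forall E, St_borel E ->
    nu E = ereal_sup [set nu K | K in [set K | compact K /\ K `<=` E]].

(* nu is a Radon measure on St(B) extending mu, i.e. nu = \hat mu *)
Definition radon_extension (mu : B -> R) (nu : set (St B) -> \bar R) : Prop :=
  radon nu /\ forall b, nu (clopen_of b) = (mu b)%:E.
End Metric.

Section Dist.
Context {R : realType} {dA dB : Order.disp_t} (A : ctbDistrLatticeType dA)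
  (B : ctbDistrLatticeType dB).

Definition d_hom (mu : B -> R) (phi psi : A -> B) : \bar R :=
  ereal_sup [set (mu (bsymdiff (phi a) (psi a)))%:E | a in [set: A]].

Definition d_hom_Bor (nu : set (St B) -> \bar R) (phi psi : A -> B) : \bar R :=
  ereal_sup [set nu ((stone_preimage phi C `\` stone_preimage psi C)
                     `|` (stone_preimage psi C `\` stone_preimage phi C))
            | C in @St_borel _ A].
End Dist.

(* Main.v *)
Require Import Defs.
From HB Require Import structures.
From mathcomp Require Import all_boot all_order all_algebra.
From mathcomp Require Import all_classical all_reals all_analysis.
From mathcomp Require Import finmap.
From mathcomp Require Import ring lra.
Set Implicit Arguments.
Unset Strict Implicit.
Unset Printing Implicit Defensive.
Import Order.Theory GRing.Theory Num.Theory.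
Local Open Scope classical_set_scope.

Section Ultra.
Context {d : Order.disp_t} (A : ctbDistrLatticeType d).

Lemma uf_meet (x : set A) (a b : A) : ultrafilter_of x ->
  x (Order.meet a b) <-> x a /\ x b.
Proof.
case=> _ _ hI hM _; split; last by case=> ??; exact: hI.
by move=> h; split; [exact: (hM _ _ h (leIl _ _))|exact: (hM _ _ h (leIr _ _))].
Qed.

Lemma uf_compl (x : set A) (a : A) : ultrafilter_of x ->
  x (Order.compl a) <-> ~ x a.
Proof.
move=> hx; have [_ hb hI _ hC] := hx; split.
  by move=> h1 h2; apply: hb; rewrite -(meetxC a); exact: hI.
by case: (hC a).
Qed.

Lemma uf_join (x : set A) (a b : A) : ultrafilter_of x ->
  x (Order.join a b) <-> x a \/ x b.
Proof.
move=> hx; have [_ hb hI hM hC] := hx; split; last first.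
  by case=> h; [exact: (hM _ _ h (leUl _ _))|exact: (hM _ _ h (leUr _ _))].
move=> h; apply: contrapT => /not_orP [na nb].
have := (uf_compl (Order.join a b) hx).1; apply => //.
by rewrite complU; apply: hI; apply/(uf_compl _ hx).
Qed.

Lemma uf_top (x : set A) : ultrafilter_of x -> x Order.top.
Proof. by case. Qed.

Lemma uf_bot (x : set A) : ultrafilter_of x -> ~ x Order.bottom.
Proof. by case. Qed.

Lemma stP (x : St A) : ultrafilter_of (proj1_sig x).
Proof. exact/asboolP/(proj2_sig x). Qed.

Lemma clopenI (a b : A) : clopen_of (Order.meet a b) = clopen_of a `&` clopen_of b.
Proof. by apply/seteqP; split => x /=; rewrite /clopen_of /= (uf_meet _ _ (stP x)). Qed.

Lemma clopenU (a b : A) : clopen_of (Order.join a b) = clopen_of a `|` clopen_of b.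
Proof. by apply/seteqP; split => x /=; rewrite /clopen_of /= (uf_join _ _ (stP x)). Qed.

Lemma clopenC (a : A) : clopen_of (Order.compl a) = ~` clopen_of a.
Proof. by apply/seteqP; split => x /=; rewrite /clopen_of /= (uf_compl _ (stP x)). Qed.

Lemma clopenT : @clopen_of _ A Order.top = setT.
Proof. by apply/seteqP; split => x //= _; exact: uf_top (stP x). Qed.

Lemma clopen0 : @clopen_of _ A Order.bottom = set0.
Proof. by apply/seteqP; split => x //=; exact: uf_bot (stP x). Qed.

Lemma clopen_bsymdiff (a b : A) : clopen_of (bsymdiff a b) =
  (clopen_of a `\` clopen_of b) `|` (clopen_of b `\` clopen_of a).
Proof. by rewrite /bsymdiff clopenU !clopenI !clopenC. Qed.

Lemma clopen_seq (s : seq (option A)) : exists a,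
  \bigcap_(i in [set i | i \in s]) St_subbase i = clopen_of a.
Proof.
elim: s => [|i s [a IH]].
  exists Order.top; rewrite clopenT; apply/seteqP; split => // x _ i.
exists (Order.meet (if i is Some b then b else Order.top) a).
rewrite clopenI -IH; apply/seteqP; split => x.
  move=> h; split; last by move=> j js; apply: h; rewrite /= in_cons js orbT.
  have := h i; rewrite /= in_cons eqxx => /(_ isT).
  by case: i {h} => [b|] //= _; exact: uf_top (stP x).
move=> [hi hs] j; rewrite /= in_cons => /orP[/eqP->|js]; last exact: hs.
by case: i hi.
Qed.

Lemma St_openP (U : set (St A)) : open U <->
  (forall x, U x -> exists a, clopen_of a x /\ clopen_of a `<=` U).
Proof.
split.
  move=> [D' sD' <-] x [V D'V Vx].
  have [F _ FV] := sD' V D'V.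
  have [a Ha] := clopen_seq (finmap.enum_fset F).
  have eV : V = clopen_of a by rewrite -Ha -FV.
  exists a; rewrite -eV; split => //.
  by move=> y hy; exists V.
move=> h.
exists [set V | exists a, V = clopen_of a /\ clopen_of a `<=` U].
  move=> V [a [-> _]]; exists [fset Some a]%fset => //.
    by move=> /= i _; apply/mem_set.
  apply/seteqP; split => x /=.
    by move=> /(_ (Some a)); apply; rewrite /= inE.
  by move=> hx i; rewrite /= inE => /eqP ->.
apply/seteqP; split => x.
  by move=> [V [a [-> sa]] Vx]; exact: sa.
move=> /h [a [ax sa]]; exists (clopen_of a) => //; exists a. by [].
Qed.

Lemma open_clopen (a : A) : open (clopen_of a).
Proof. by apply/St_openP => x hx; exists a; split. Qed.

Lemma St_hausdorff : hausdorff_space (St A).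
Proof.
rewrite open_hausdorff => x y xy.
have [a [xa ya]] : exists a, proj1_sig x a /\ ~ proj1_sig y a.
  apply: contrapT => hn; move/negP: xy; apply; apply/eqP.
  apply: val_inj; apply/seteqP; split => a /= h.
    by apply: contrapT => hy; apply: hn; exists a.
  apply: contrapT => hx; apply: hn; exists (Order.compl a); split.
    exact/(uf_compl _ (stP x)).
  by move/(uf_compl _ (stP y)).
exists (clopen_of a, clopen_of (Order.compl a)) => /=.
  by split; apply/mem_set => //; apply/(uf_compl _ (stP y)).
split; [exact: open_clopen|exact: open_clopen|].
by rewrite clopenC setICr eqxx.
Qed.

End Ultra.

Section Hom2.
Context {dA dB : Order.disp_t} (A : ctbDistrLatticeType dA)
  (B : ctbDistrLatticeType dB) (phi : A -> B) (hphi : is_bhom phi).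

Lemma bhom_le (a b : A) : (a <= b)%O -> (phi a <= phi b)%O.
Proof.
case: hphi => hI _ _ _ _ /meet_idPl h; apply/meet_idPl.
by rewrite -hI h.
Qed.

Lemma uf_pre (x : St B) : ultrafilter_of (phi @^-1` proj1_sig x).
Proof.
have hx := stP x; case: hphi => hI hU hC h0 h1.
split => /=.
- by rewrite h1; exact: uf_top.
- by rewrite h0; exact: uf_bot.
- by move=> a b ha hb; rewrite hI; exact/(uf_meet _ _ hx).
- move=> a b ha /bhom_le hab; case: hx => _ _ _ hM _; exact: hM hab.
- by move=> a; rewrite hC; case: hx => _ _ _ _; apply.
Qed.

Definition fst_ (x : St B) : St A :=
  exist _ (phi @^-1` proj1_sig x) (asboolT (uf_pre x)).

Lemma stone_preimageE (C : set (St A)) : stone_preimage phi C = fst_ @^-1` C.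
Proof.
apply/seteqP; split => x /=.
  move=> [y [ey Cy]]; suff -> : fst_ x = y by [].
  by apply: val_inj; rewrite /= ey.
by move=> h; exists (fst_ x).
Qed.

Lemma fst_clopen (a : A) : fst_ @^-1` clopen_of a = clopen_of (phi a).
Proof. by []. Qed.

Lemma fst_open (U : set (St A)) : open U -> open (fst_ @^-1` U).
Proof.
move/St_openP => hU; apply/St_openP => x /hU [a [ax sa]].
by exists (phi a); split => // y hy; apply: sa.
Qed.

End Hom2.

Lemma clopen_join {d : Order.disp_t} (A : ctbDistrLatticeType d) (s : seq A) :
  clopen_of (\join_(i <- s) i)%O = \bigcup_(i in [set i | i \in s]) clopen_of i.
Proof.
elim: s => [|a s IH].
  by rewrite big_nil clopen0; apply/seteqP; split => x //= [i]; rewrite /= in_nil.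
rewrite big_cons clopenU IH; apply/seteqP; split => x.
  case=> [h|[i hi h]]; first by exists a => //=; rewrite in_cons eqxx.
  by exists i => //=; rewrite in_cons hi orbT.
move=> [i /=]; rewrite in_cons => /orP[/eqP->|hi] h; first by left.
by right; exists i.
Qed.

Section Meas.
Context {R : realType} {dB : Order.disp_t} (B : ctbDistrLatticeType dB).

Definition StP (x0 : St B) : Type := St B.
Variable x0 : St B.
HB.instance Definition _ := Choice.on (StP x0).
HB.instance Definition _ := isPointed.Build (StP x0) x0.
HB.instance Definition _ := Topological.on (StP x0).

Definition Gop : set (set (StP x0)) := [set U | @open (St B) U].
Definition MT := g_sigma_algebraType Gop.

Lemma measurableE (X : set MT) : measurable X = St_borel X.
Proof. by []. Qed.

Variables (nu : set (St B) -> \bar R).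

Definition nuM (hnu : borel_measure nu) (X : set MT) : \bar R :=
  if pselect (St_borel X) is left _ then nu X else 0%E.

Variable (hnu : borel_measure nu).

Lemma nuME X : St_borel X -> nuM hnu X = nu X.
Proof. by rewrite /nuM; case: pselect. Qed.

Lemma nuMN X : ~ St_borel X -> nuM hnu X = 0%E.
Proof. by rewrite /nuM; case: pselect. Qed.

Lemma nuM0 : nuM hnu set0 = 0%E.
Proof.
rewrite nuME; first by case: hnu.
exact: (@sigma_algebra0 _ setT).
Qed.

Lemma nuM_ge0 X : (0 <= nuM hnu X)%E.
Proof. by rewrite /nuM; case: pselect => // h; case: hnu => _ + _; apply. Qed.

Lemma nuM_sigma : semi_sigma_additive (nuM hnu).
Proof.
move=> F mF tF mU; rewrite nuME //.
have -> : (fun n => (\sum_(0 <= i < n) nuM hnu (F i))%E) =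
          (fun n => (\sum_(0 <= i < n) nu (F i))%E).
  by apply: funext => n; apply: eq_bigr => i _; rewrite nuME //; exact: mF.
by case: hnu => _ _; apply.
Qed.

HB.instance Definition _ := isMeasure.Build _ MT R (nuM hnu)
  nuM0 nuM_ge0 nuM_sigma.

End Meas.

Definition sd {T} (X Y : set T) := (X `\` Y) `|` (Y `\` X).

Lemma sdC_C {T} (X Y : set T) : sd (~` X) (~` Y) = sd X Y.
Proof.
apply/seteqP; split => x /=.
  by case=> -[h1 h2]; [right|left]; split => //; apply: contrapT.
by case=> -[h1 h2]; [right|left]; split => //; apply.
Qed.

Lemma sdU {T} (X1 X2 Y1 Y2 : set T) :
  sd (X1 `|` X2) (Y1 `|` Y2) `<=` sd X1 Y1 `|` sd X2 Y2.
Proof.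
move=> x /= [[[h|h] hn]|[[h|h] hn]].
- by left; left; split => // ?; apply: hn; left.
- by right; left; split => // ?; apply: hn; right.
- by left; right; split => // ?; apply: hn; left.
- by right; right; split => // ?; apply: hn; right.
Qed.

Lemma sd_tri {T} (X Y Z : set T) : sd X Z `<=` sd X Y `|` sd Y Z.
Proof.
move=> x /= [[hX hZ]|[hZ hX]].
- have [hY|hY] := pselect (Y x); [right; left|left; left]; by split.
- have [hY|hY] := pselect (Y x); [left; right|right; right]; by split.
Qed.

Section Main.
Context {R : realType} {dA dB : Order.disp_t} (A : ctbDistrLatticeType dA)
  (B : ctbDistrLatticeType dB) (mu : B -> R) (hmu : metric_measure mu)
  (nu : set (St B) -> \bar R) (hnu : radon_extension mu nu)
  (phi psi : A -> B) (hphi : is_bhom phi) (hpsi : is_bhom psi) (x0 : St B).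

Local Open Scope ereal_scope.

Let hb : borel_measure nu := hnu.1.1.
Local Notation m := (@nuM _ _ _ x0 _ hb).
Let f := fst_ hphi.
Let g := fst_ hpsi.

Lemma mE (X : set (St B)) : St_borel X -> m X = nu X.
Proof. exact: nuME. Qed.

Lemma borel_open (U : set (St B)) : open U -> St_borel U.
Proof. by move=> oU; apply: sub_sigma_algebra. Qed.

Lemma borel_clopen (b : B) : St_borel (clopen_of b).
Proof. apply: borel_open; exact: open_clopen. Qed.

Lemma m_clopen (b : B) : m (clopen_of b) = (mu b)%:E.
Proof. by rewrite mE; [exact: hnu.2|exact: borel_clopen]. Qed.

Lemma mle (X Y : set (St B)) : St_borel X -> St_borel Y -> X `<=` Y -> m X <= m Y.
Proof. by move=> hX hY XY; apply: le_measure => //; apply/mem_set. Qed.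

Lemma mU2 (X Y : set (St B)) : St_borel X -> St_borel Y -> m (X `|` Y) <= m X + m Y.
Proof. by move=> hX hY; apply: measureU2. Qed.

Lemma m_le1 (X : set (St B)) : m X <= 1.
Proof.
have [hX|hX] := pselect (St_borel X); last by rewrite nuMN // lee01.
have hT : St_borel (@setT (St B)) := @measurableT _ (MT x0).
apply: (le_trans (mle hX hT (@subsetT _ X))).
rewrite -(@clopenT _ B) m_clopen; case: hmu => -> _ _; exact: lexx.
Qed.

Lemma m_fin (X : set (St B)) : m X \is a fin_num.
Proof.
rewrite ge0_fin_numE ?measure_ge0 //; apply: le_lt_trans (m_le1 X) _.
exact: ltry.
Qed.

Lemma borel_sd (X Y : set (St B)) : St_borel X -> St_borel Y -> St_borel (sd X Y).
Proof.
move=> hX hY; apply: (@measurableU _ (MT x0)); apply: (@measurableD _ (MT x0)) => //.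
Qed.

Definition approx (E : set (St A)) := forall e : R, (0 < e)%R -> exists a : A,
  m (f @^-1` sd E (clopen_of a)) <= e%:E /\ m (g @^-1` sd E (clopen_of a)) <= e%:E.

Definition Mset : set (set (St A)) :=
  [set E | [/\ St_borel (f @^-1` E), St_borel (g @^-1` E) & approx E]].

Lemma Mset0 : Mset set0.
Proof.
split; try exact: (@sigma_algebra0 _ setT).
move=> e e0; exists Order.bottom; rewrite clopen0.
have -> : sd (@set0 (St A)) set0 = set0 by apply/seteqP; split => x [] [].
by rewrite !preimage_set0 measure0; split; rewrite lee_fin ltW.
Qed.


Lemma m_lt (X : set (St B)) : m X < +oo.
Proof. exact: le_lt_trans (m_le1 X) (ltry 1%R). Qed.

Lemma half_add (e : R) : (e / 2)%:E + (e / 2)%:E = e%:E.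
Proof. by rewrite -EFinD -splitr. Qed.

Lemma MsetC E : Mset E -> Mset (setT `\` E).
Proof.
rewrite setTD => -[hf hg ha]; split.
- exact: (@measurableC _ (MT x0)).
- exact: (@measurableC _ (MT x0)).
move=> e e0; have [a h] := ha e e0; exists (Order.compl a).
by rewrite clopenC sdC_C.
Qed.

Lemma key2 (h : St B -> St A) (E F : set (St A)) (a b : A) (e : R) :
  St_borel (h @^-1` E) -> St_borel (h @^-1` F) ->
  (forall c, St_borel (h @^-1` clopen_of c)) ->
  m (h @^-1` sd E (clopen_of a)) <= (e / 2)%:E ->
  m (h @^-1` sd F (clopen_of b)) <= (e / 2)%:E ->
  m (h @^-1` sd (E `|` F) (clopen_of (Order.join a b))) <= e%:E.
Proof.
move=> h1 h2 h3 h4 h5; rewrite clopenU.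
have b1 : St_borel (h @^-1` sd E (clopen_of a)) by exact: (borel_sd h1 (h3 a)).
have b2 : St_borel (h @^-1` sd F (clopen_of b)) by exact: (borel_sd h2 (h3 b)).
have b3 : St_borel (h @^-1` sd (E `|` F) (clopen_of a `|` clopen_of b)).
  apply: borel_sd; first exact: (@measurableU _ (MT x0)).
  exact: (@measurableU _ (MT x0) _ _ (h3 a) (h3 b)).
apply: le_trans (mle b3 _ (fun x (hx : _) => sdU hx)) _.
  exact: (@measurableU _ (MT x0)).
apply: le_trans (mU2 b1 b2) _.
by rewrite -half_add; apply: leeD.
Qed.

Lemma borel_f_clopen c : St_borel (f @^-1` clopen_of c).
Proof. exact: borel_clopen. Qed.

Lemma borel_g_clopen c : St_borel (g @^-1` clopen_of c).
Proof. exact: borel_clopen. Qed.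

Lemma MsetU2 E F : Mset E -> Mset F -> Mset (E `|` F).
Proof.
move=> [hfE hgE aE] [hfF hgF aF]; split.
- exact: (@measurableU _ (MT x0)).
- exact: (@measurableU _ (MT x0)).
move=> e e0; have e20 : (0 < e / 2)%R by rewrite divr_gt0.
have [a [haf hag]] := aE _ e20; have [b [hbf hbg]] := aF _ e20.
exists (Order.join a b); split.
- exact: key2 hfE hfF borel_f_clopen haf hbf.
- exact: key2 hgE hgF borel_g_clopen hag hbg.
Qed.


Definition Gs (E : nat -> set (St A)) (N : nat) : set (St A) :=
  [set x | exists2 i, (i < N)%N & E i x].

Lemma Gs0 E : Gs E 0 = set0.
Proof. by apply/seteqP; split => x // [i]. Qed.

Lemma GsS E N : Gs E N.+1 = Gs E N `|` E N.
Proof.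
apply/seteqP; split => x.
  move=> [i]; rewrite ltnS leq_eqVlt => /orP[/eqP->|hi] hx; first by right.
  by left; exists i.
case=> [[i hi hx]|hx]; first by exists i => //; exact: ltnW.
by exists N.
Qed.

Lemma MsetGs E : (forall n, Mset (E n)) -> forall N, Mset (Gs E N).
Proof.
move=> hE; elim=> [|N IH]; first by rewrite Gs0; exact: Mset0.
by rewrite GsS; apply: MsetU2.
Qed.

Lemma tail_small (h : St B -> St A) (E : nat -> set (St A)) :
  (forall n, St_borel (h @^-1` E n)) -> forall e : R, (0 < e)%R ->
  \forall N \near \oo, m (h @^-1` (\bigcup_n E n `\` Gs E N)) < e%:E.
Proof.
move=> hE e e0.
pose H N := h @^-1` (\bigcup_n E n `\` Gs E N).
have hGs N : St_borel (h @^-1` Gs E N).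
  elim: N => [|N IH]; first by rewrite Gs0; exact: (@measurable0 _ (MT x0)).
  by rewrite GsS; exact: (@measurableU _ (MT x0) _ _ IH (hE N)).
have hU : St_borel (h @^-1` \bigcup_n E n).
  exact: (@bigcupT_measurable _ (MT x0) (fun n => h @^-1` E n)).
have mH N : St_borel (H N) by exact: (@measurableD _ (MT x0) _ _ hU (hGs N)).
have H0 : \bigcap_n H n = set0.
  apply/seteqP; split => x // hx.
  have [[k _ hk] _] := hx 0%N I.
  by have [_ hn] := hx k.+1 I; apply: hn; exists k.
have cv : (m \o H) @ \oo --> m (\bigcap_n H n).
  apply: nonincreasing_cvg_mu => //.
  - exact: m_lt.
  - by rewrite H0; exact: (@measurable0 _ (MT x0)).
  - move=> n k nk; rewrite subsetEset => x /= [hx hn]; split => // -[i hi hi'].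
    by apply: hn; exists i => //; exact: leq_trans hi nk.
rewrite H0 measure0 in cv.
exact: cv _ (open_ereal_lt' _).
Qed.


Lemma Mset_bigcup (E : nat -> set (St A)) :
  (forall n, Mset (E n)) -> Mset (\bigcup_n E n).
Proof.
move=> hE.
have hfE n : St_borel (f @^-1` E n) by case: (hE n).
have hgE n : St_borel (g @^-1` E n) by case: (hE n).
have hfU : St_borel (f @^-1` \bigcup_n E n).
  exact: (@bigcupT_measurable _ (MT x0) (fun n => f @^-1` E n)).
have hgU : St_borel (g @^-1` \bigcup_n E n).
  exact: (@bigcupT_measurable _ (MT x0) (fun n => g @^-1` E n)).
split => // e e0; have e20 : (0 < e / 2)%R by rewrite divr_gt0.
have [N1 _ hN1] := tail_small hfE e20.
have [N2 _ hN2] := tail_small hgE e20.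
pose N := maxn N1 N2.
have t1 := hN1 N (leq_maxl N1 N2).
have t2 := hN2 N (leq_maxr N1 N2).
have [hfG hgG aG] := MsetGs hE N.
have [a [haf hag]] := aG _ e20.
exists a.
have key (h : St B -> St A) : St_borel (h @^-1` \bigcup_n E n) ->
  St_borel (h @^-1` Gs E N) -> St_borel (h @^-1` clopen_of a) ->
  m (h @^-1` (\bigcup_n E n `\` Gs E N)) < (e / 2)%:E ->
  m (h @^-1` sd (Gs E N) (clopen_of a)) <= (e / 2)%:E ->
  m (h @^-1` sd (\bigcup_n E n) (clopen_of a)) <= e%:E.
  move=> b1 b2 b3 l1 l2.
  have c1 : St_borel (h @^-1` (\bigcup_n E n `\` Gs E N)).
    exact: (@measurableD _ (MT x0)).
  have c2 : St_borel (h @^-1` sd (Gs E N) (clopen_of a)) by exact: borel_sd.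
  have sub : h @^-1` sd (\bigcup_n E n) (clopen_of a) `<=`
     h @^-1` (\bigcup_n E n `\` Gs E N) `|` h @^-1` sd (Gs E N) (clopen_of a).
    move=> x /= /(@sd_tri _ _ (Gs E N)) [hx|hx]; last by right.
    case: hx => -[hx hn]; first by left.
    by exfalso; apply: hn; have [i _ hi] := hx; exists i.
  apply: le_trans (mle (borel_sd b1 b3) _ sub) _.
    exact: (@measurableU _ (MT x0)).
  apply: le_trans (mU2 c1 c2) _.
  by rewrite -half_add; apply: leeD => //; exact: ltW.
split.
- exact: key hfU hfG (borel_f_clopen a) t1 haf.
- exact: key hgU hgG (borel_g_clopen a) t2 hag.
Qed.

Lemma Mset_sigma : sigma_algebra setT Mset.
Proof.
split; [exact: Mset0|exact: MsetC|exact: Mset_bigcup].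
Qed.


Lemma borel_closed (K : set (St B)) : closed K -> St_borel K.
Proof.
move=> cK; rewrite -(setCK K).
apply: (@measurableC _ (MT x0)); apply: borel_open; exact: closed_openC.
Qed.

Lemma inner (h : St B -> St A) (hc : forall c : A, open (h @^-1` clopen_of c))
  (U : set (St A)) (oU : open U) (ohU : open (h @^-1` U)) (e : R) :
  (0 < e)%R -> exists a : A, clopen_of a `<=` U /\ m (h @^-1` U `\` h @^-1` clopen_of a) <= e%:E.
Proof.
move=> e0.
set V := h @^-1` U.
have bV : St_borel V by exact: borel_open.
have supV := hnu.1.2 V bV.
have finV := m_fin V.
have : ((fine (m V) - e)%:E < ereal_sup [set nu K | K in [set K | compact K /\ K `<=` V]]).
  rewrite -supV -mE // -(fineK finV) lte_fin.
  by rewrite ltrBlDr ltrDl.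
move=> /ereal_sup_gt [_ [K [cK KV] <-] ltK].
have bK : St_borel K by apply: borel_closed; apply: compact_closed => //; exact: St_hausdorff.
have cK' : @compact (StP x0) K := cK.
rewrite compact_cover in cK'.
have [D' sD' cov] : finite_subset_cover [set c : A | clopen_of c `<=` U]
    (fun c => h @^-1` clopen_of c) K.
  apply: cK' => [c _|x Kx]; first exact: hc.
  have /St_openP hU := oU.
  have [c [hc1 hc2]] := hU _ (KV _ Kx).
  by exists c.
exists (\join_(c <- finmap.enum_fset D') c)%O; split.
  rewrite clopen_join => y [c /= cD' hy].
  have := sD' c cD'; move=> /set_mem; apply; exact: hy.
have KC : K `<=` h @^-1` clopen_of (\join_(c <- finmap.enum_fset D') c)%O.
  move=> x /cov [c /= cD' hx]; rewrite /preimage /= clopen_join.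
  by exists c.
have bC : St_borel (h @^-1` clopen_of (\join_(c <- finmap.enum_fset D') c)%O).
  exact: borel_open.
apply: (@le_trans _ _ (m (V `\` K))).
  apply: mle; [exact: (@measurableD _ (MT x0))|exact: (@measurableD _ (MT x0))|].
  by move=> x [hx hn]; split => // /KC.
rewrite measureD // ?m_lt //.
have -> : V `&` K = K by apply/setIidr.
change (m V - m K <= e%:E).
rewrite (mE bV) (mE bK).
have fV : nu V \is a fin_num by rewrite -mE.
have fK : nu K \is a fin_num by rewrite -mE // m_fin.
move: ltK; rewrite -(fineK fV) -(fineK fK) -EFinB /= !lte_fin lee_fin.
move=> hlt; rewrite mE // in hlt; lra.
Qed.


Lemma Mset_open (U : set (St A)) : open U -> Mset U.
Proof.
move=> oU; split.
- by apply: borel_open; exact: (fst_open hphi oU).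
- by apply: borel_open; exact: (fst_open hpsi oU).
move=> e e0.
have [af [haf hmf]] := @inner f (fun c => open_clopen (phi c)) U oU (fst_open hphi oU) e e0.
have [ag [hag hmg]] := @inner g (fun c => open_clopen (psi c)) U oU (fst_open hpsi oU) e e0.
exists (Order.join af ag); rewrite clopenU.
have sub : sd U (clopen_of af `|` clopen_of ag) `<=` U `\` (clopen_of af `|` clopen_of ag).
  move=> x [//|[[hx|hx] hn]]; exfalso; apply: hn; [exact: haf|exact: hag].
have bU (h : St B -> St A) (hh : forall c : A, open (h @^-1` clopen_of c)) : open (h @^-1` U) ->
  St_borel (h @^-1` sd U (clopen_of af `|` clopen_of ag)).
  move=> ohU.
  have c1 : St_borel (h @^-1` (clopen_of af `|` clopen_of ag)).
    have d1 := borel_open (hh af); have d2 := borel_open (hh ag); exact: (@measurableU _ (MT x0)).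
  exact: (borel_sd (borel_open ohU) c1).
split.
- apply: le_trans hmf; apply: mle.
  + exact: (bU f (fun c => open_clopen (phi c)) (fst_open hphi oU)).
  + apply: (@measurableD _ (MT x0)); [apply: borel_open; exact: fst_open|exact: borel_clopen].
  + move=> x /= /sub [hx hn]; split => // hf; apply: hn; left; exact: hf.
- apply: le_trans hmg; apply: mle.
  + exact: (bU g (fun c => open_clopen (psi c)) (fst_open hpsi oU)).
  + apply: (@measurableD _ (MT x0)); [apply: borel_open; exact: fst_open|exact: borel_clopen].
  + move=> x /= /sub [hx hn]; split => // hf; apply: hn; right; exact: hf.
Qed.

Lemma borel_Mset : @St_borel _ A `<=` Mset.
Proof. exact: smallest_sub Mset_sigma Mset_open. Qed.

Lemma sdC {T} (X Y : set T) : sd X Y = sd Y X.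
Proof. by rewrite /sd setUC. Qed.

Lemma bound (C : set (St A)) : St_borel C ->
  nu (sd (f @^-1` C) (g @^-1` C)) <= d_hom mu phi psi.
Proof.
move=> /borel_Mset [hfC hgC aC].
apply/lee_addgt0Pr => e e0; have e20 : (0 < e / 2)%R by rewrite divr_gt0.
have [a [haf hag]] := aC _ e20.
set X := f @^-1` C; set Y := g @^-1` C.
set X' := clopen_of (phi a); set Y' := clopen_of (psi a).
have bX' : St_borel X' by exact: borel_clopen.
have bY' : St_borel Y' by exact: borel_clopen.
have b1 : St_borel (sd X X') by exact: borel_sd.
have b2 : St_borel (sd X' Y') by exact: borel_sd.
have b3 : St_borel (sd Y' Y) by exact: borel_sd.
have b23 : St_borel (sd X' Y' `|` sd Y' Y) by exact: (@measurableU _ (MT x0)).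
have bXY : St_borel (sd X Y) by exact: borel_sd.
rewrite -mE //.
have sub : sd X Y `<=` sd X X' `|` (sd X' Y' `|` sd Y' Y).
  move=> x /(@sd_tri _ _ X') [h|/(@sd_tri _ _ Y') h]; [by left|by right].
apply: le_trans (mle bXY _ sub) _.
  exact: (@measurableU _ (MT x0)).
apply: le_trans (mU2 b1 b23) _.
have e1 : m (sd X X') <= (e / 2)%:E by exact: haf.
have e3 : m (sd Y' Y) <= (e / 2)%:E by rewrite sdC; exact: hag.
have e2 : m (sd X' Y') <= d_hom mu phi psi.
  have -> : sd X' Y' = clopen_of (bsymdiff (phi a) (psi a)) by rewrite clopen_bsymdiff.
  rewrite m_clopen.
  by apply: ereal_sup_ubound; exists a.
apply: le_trans (leeD e1 (le_trans (mU2 b2 b3) (leeD e2 e3))) _.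
rewrite addeCA -EFinD -splitr addeC; exact: lexx.
Qed.

End Main.

Theorem lemma4p6 (R : realType) (dA dB : Order.disp_t)
  (A : ctbDistrLatticeType dA) (B : ctbDistrLatticeType dB)
  (mu : B -> R) (hmu : metric_measure mu)
  (nu : set (St B) -> \bar R) (hnu : radon_extension mu nu)
  (phi psi : A -> B) (hphi : is_bhom phi) (hpsi : is_bhom psi) :
  d_hom mu phi psi = d_hom_Bor nu phi psi.
Proof.
have [x0 _] : exists x : St B, True.
  apply: contrapT => hn.
  have e0 : @clopen_of _ B Order.top = set0.
    by apply/seteqP; split => x // _; apply: hn; exists x.
  have := hnu.2 Order.top; rewrite e0; case: hnu => -[[-> _ _] _] _.
  by case: hmu => -> _ _ => /(congr1 fine) /= /eqP; rewrite eq_sym oner_eq0.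
apply/eqP; rewrite eq_le; apply/andP; split.
  apply: ge_ereal_sup => _ [a _ <-].
  apply: ereal_sup_ubound; exists (clopen_of a).
    by apply: sub_sigma_algebra; exact: open_clopen.
  rewrite !stone_preimageE !fst_clopen -clopen_bsymdiff.
  exact: hnu.2.
apply: ge_ereal_sup => _ [C hC <-].
rewrite !stone_preimageE.
exact: (bound hmu hnu hphi hpsi x0 hC).
Qed.
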